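(* Let $X\subseteq \mathbb{P}^1\times\mathbb{P}^1\times\mathbb{P}^1$ be a variety of lines. Then the ideal $I_X$ is a complete intersection if and only if $I_X=(F_1,F_2)$ with $\deg F_1=a\mathbf e_i$ and $\deg F_2=b\mathbf e_j+c\mathbf e_k$ with $j,k\neq i$, for some $a,b,c\in\mathbb N$.
   Context: $R=K[x_{1,0},x_{1,1},x_{2,0},x_{2,1},x_{3,0},x_{3,1}]$ ($K$ algebraically closed, characteristic zero) trigraded by $\deg x_{i,j}=\mathbf e_i$ ($\mathbf e_1,\mathbf e_2,\mathbf e_3$ the standard basis of $\mathbb N^3$), coordinate ring of $\mathbb{P}^1\times\mathbb{P}^1\times\mathbb{P}^1$. A line is the zero locus $\mathcal L(F,G)$ of $(F,G)$ with $F,G$ linear forms of two different degrees among $\mathbf e_1,\mathbf e_2,\mathbf e_3$. A variety of lines is a finite union of distinct lines, with defining ideal $I_X$ the intersection of the ideals of its lines. An ideal is a complete intersection if it is generated by a regular sequence; $F_1,F_2$ are trihomogeneous. *)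

(* Defs.v *)
From HB Require Import structures.
From mathcomp Require Import all_boot all_order all_algebra.
From mathcomp Require Import mpoly.
Set Implicit Arguments. Unset Strict Implicit. Unset Printing Implicit Defensive.
Import GRing.Theory.
Local Open Scope ring_scope.

(* Coordinate ring of P^1 x P^1 x P^1: R = K[x_{1,0},x_{1,1},x_{2,0},x_{2,1},x_{3,0},x_{3,1}],
   encoded as {mpoly K[6]}; the variable x_{i+1,j} (i : 'I_3, j : 'I_2) is 'X_(vidx i j),
   where vidx i j has value 2*i + j. *)
Definition vidx (i : 'I_3) (j : 'I_2) : 'I_6 := inord (2 * i + j).

Definition o3 (k : nat) : 'I_3 := inord k.
Definition o2 (k : nat) : 'I_2 := inord k.
Definition tdeg (m : 'X_{1..6}) : nat * nat * nat :=
  (m (vidx (o3 0) (o2 0)) + m (vidx (o3 0) (o2 1)),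
   m (vidx (o3 1) (o2 0)) + m (vidx (o3 1) (o2 1)),
   m (vidx (o3 2) (o2 0)) + m (vidx (o3 2) (o2 1)))%N.

Definition evec (i : 'I_3) : nat * nat * nat :=
  ((i == 0 :> nat) : nat, (i == 1 :> nat) : nat, (i == 2 :> nat) : nat).
Definition tscale (a : nat) (d : nat * nat * nat) : nat * nat * nat :=
  (a * d.1.1, a * d.1.2, a * d.2)%N.
Definition tadd (d d' : nat * nat * nat) : nat * nat * nat :=
  (d.1.1 + d'.1.1, d.1.2 + d'.1.2, d.2 + d'.2)%N.

Section Defs.
Variable K : fieldType.
Notation R := {mpoly K[6]}.

Definition trihomog_of (d : nat * nat * nat) (p : R) : Prop :=
  forall m : 'X_{1..6}, p@_m != 0 -> tdeg m = d.
Definition trihomog (p : R) : Prop := exists d, trihomog_of d p.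

Definition linear_form (i : 'I_3) (F : R) : Prop := F != 0 /\ trihomog_of (evec i) F.

Definition ideal_gen (gs : seq R) (f : R) : Prop :=
  exists cs : seq R, size cs = size gs /\ f = \sum_(l < size gs) cs`_l * gs`_l.

(* Points of P^1 x P^1 x P^1, given by representatives in K^6 with each pair nonzero. *)
Definition is_point (v : 'I_6 -> K) : Prop :=
  forall i : 'I_3, v (vidx i (o2 0)) != 0 \/ v (vidx i (o2 1)) != 0.

(* A line: data (F, G) of linear forms of two different degrees e_i, e_j (i <> j). *)
Record line := Line {
  l_i : 'I_3; l_j : 'I_3; l_F : R; l_G : R
}.
Definition dline : line := Line (o3 0) (o3 0) 0 0.
Definition is_line (L : line) : Prop :=
  l_i L != l_j L /\ linear_form (l_i L) (l_F L) /\ linear_form (l_j L) (l_G L).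

Definition locus (L : line) (v : 'I_6 -> K) : Prop :=
  is_point v /\ (l_F L).@[v] = 0 /\ (l_G L).@[v] = 0.

Definition line_ideal (L : line) : R -> Prop := ideal_gen [:: l_F L; l_G L].

Definition variety_of_lines (X : seq line) : Prop :=
  X <> [::] /\ (forall l : 'I_(size X), is_line (nth dline X l)) /\
  (forall a b : 'I_(size X), a != b ->
     exists v, ~ (locus (nth dline X a) v <-> locus (nth dline X b) v)).

Definition ideal_X (X : seq line) (f : R) : Prop :=
  forall l : 'I_(size X), line_ideal (nth dline X l) f.

Definition regular_seq (gs : seq R) : Prop :=
  ~ ideal_gen gs 1 /\
  forall l : 'I_(size gs), forall h : R,
    ideal_gen (take l gs) (gs`_l * h) -> ideal_gen (take l gs) h.

Definition complete_intersection (I : R -> Prop) : Prop :=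
  exists gs : seq R, (forall g, g \in gs -> trihomog g) /\ regular_seq gs /\
    (forall f, I f <-> ideal_gen gs f).

End Defs.

(* Main.v *)
Require Import Defs.
From HB Require Import structures.
From mathcomp Require Import all_boot all_order all_algebra.
From mathcomp Require Import mpoly.
Import GRing.Theory.
Local Open Scope ring_scope.
From mathcomp Require Import ring zify.
Set Implicit Arguments. Unset Strict Implicit. Unset Printing Implicit Defensive.

Definition comp3 (d : nat * nat * nat) (i : 'I_3) : nat :=
  match val i with 0 => d.1.1 | 1 => d.1.2 | _ => d.2 end.

Lemma o3E k : (k < 3)%N -> (o3 k : nat) = k.
Proof. by move=> h; rewrite /o3 inordK. Qed.
Lemma o2E k : (k < 2)%N -> (o2 k : nat) = k.
Proof. by move=> h; rewrite /o2 inordK. Qed.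
Lemma o3K (i : 'I_3) : o3 i = i.
Proof. by apply: ord_inj; rewrite o3E. Qed.
Lemma o2K (i : 'I_2) : o2 i = i.
Proof. by apply: ord_inj; rewrite o2E. Qed.
Lemma vidxE i j : (vidx i j : nat) = (2 * i + j)%N.
Proof. by rewrite /vidx inordK //; case: i j => [[|[|[|?]]] ?] [[|[|?]] ?]. Qed.

Lemma tdeg_comp m i :
  comp3 (tdeg m) i = (m (vidx i (o2 0)) + m (vidx i (o2 1)))%N.
Proof.
case: i => [[|[|[|k]]] Hi] //; rewrite /comp3 /tdeg /=;
  by rewrite -[Ordinal Hi]o3K.
Qed.

Lemma o2_cases (j : 'I_2) : j = o2 0 \/ j = o2 1.
Proof. by case: j => [[|[|k]] Hj] //; [left|right]; apply: ord_inj; rewrite o2E. Qed.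

Lemma mvar_le (m : 'X_{1..6}) i j : (m (vidx i j) <= comp3 (tdeg m) i)%N.
Proof. by rewrite tdeg_comp; case: (o2_cases j) => ->; [apply: leq_addr|apply: leq_addl]. Qed.

Lemma vidx_surj (u : 'I_6) : exists i j, u = vidx i j.
Proof.
case: u => [[|[|[|[|[|[|k]]]]]] Hu] //.
- by exists (o3 0), (o2 0); apply: ord_inj; rewrite vidxE o3E ?o2E.
- by exists (o3 0), (o2 1); apply: ord_inj; rewrite vidxE o3E ?o2E.
- by exists (o3 1), (o2 0); apply: ord_inj; rewrite vidxE o3E ?o2E.
- by exists (o3 1), (o2 1); apply: ord_inj; rewrite vidxE o3E ?o2E.
- by exists (o3 2), (o2 0); apply: ord_inj; rewrite vidxE o3E ?o2E.
- by exists (o3 2), (o2 1); apply: ord_inj; rewrite vidxE o3E ?o2E.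
Qed.

Lemma vidx_inj i j i' j' : vidx i j = vidx i' j' -> i = i' /\ j = j'.
Proof.
move/(congr1 (@nat_of_ord 6)); rewrite !vidxE => h.
have hj : j = j' :> nat.
  by move: h => /(congr1 (modn^~ 2)); rewrite !(mulnC 2) !modnMDl !modn_small.
split; apply: ord_inj => //.
by move: h; rewrite hj => /addIn /eqP; rewrite eqn_mul2l /= => /eqP.
Qed.

Lemma vidx_neq01 i : vidx i (o2 0) != vidx i (o2 1).
Proof. by apply/eqP => /vidx_inj [_ /(congr1 (@nat_of_ord 2))]; rewrite !o2E. Qed.

Lemma vidx_neqi i j i' j' : i != i' -> vidx i j != vidx i' j'.
Proof. by move=> h; apply/eqP => /vidx_inj [/eqP]; rewrite (negbTE h). Qed.

Lemma comp3_evec i i' : comp3 (evec i) i' = (i == i') :> nat.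
Proof. by case: i' => [[|[|[|k]]] Hi] //; case: i => [[|[|[|]]] ?]. Qed.
Lemma comp3_tscale a d i : comp3 (tscale a d) i = (a * comp3 d i)%N.
Proof. by case: i => [[|[|[|]]] ?]. Qed.
Lemma comp3_tadd d d' i : comp3 (tadd d d') i = (comp3 d i + comp3 d' i)%N.
Proof. by case: i => [[|[|[|]]] ?]. Qed.
Lemma comp3_inj d d' : (forall i, comp3 d i = comp3 d' i) -> d = d'.
Proof.
case: d => [[x y] z]; case: d' => [[x' y'] z'] H.
have := H (Ordinal (isT : (0 < 3)%N)); have := H (Ordinal (isT : (1 < 3)%N)).
by have := H (Ordinal (isT : (2 < 3)%N)); rewrite /comp3 /= => -> -> ->.
Qed.

Lemma dir_others i u : u != vidx i (o2 0) -> u != vidx i (o2 1) ->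
  exists i' j', i' != i /\ u = vidx i' j'.
Proof.
have [i' [j' ->]] := vidx_surj u => h0 h1; exists i', j'; split => //.
apply/eqP => ei; move: h0 h1; rewrite ei; case: (o2_cases j') => ->; by rewrite eqxx.
Qed.

Section Work.
Variable K : fieldType.
Local Notation R := {mpoly K[6]}.

Lemma th_zero_var d (p : R) m i j :
  trihomog_of d p -> p@_m != 0 -> comp3 d i = 0%N -> m (vidx i j) = 0%N.
Proof.
move=> H nz c0; have := mvar_le m i j; rewrite (H m nz) c0.
by rewrite leqn0 => /eqP.
Qed.

Notation subst f := (comp_mpoly [tuple f u | u < 6]).

Lemma subst_sum (f : 'I_6 -> R) (I : Type) (r : seq I) (F : I -> R) :
  subst f (\sum_(x <- r) F x) = \sum_(x <- r) subst f (F x).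
Proof. exact: raddf_sum. Qed.

Lemma substX (f : 'I_6 -> R) u : subst f 'X_u = f u.
Proof. by rewrite comp_mpolyXU -tnth_nth tnth_mktuple. Qed.

Lemma substXm (f : 'I_6 -> R) m : subst f 'X_[m] = \prod_(u < 6) f u ^+ m u.
Proof. by rewrite comp_mpolyX; apply: eq_bigr => u _; rewrite tnth_mktuple. Qed.

Lemma subst_fix (f : 'I_6 -> R) p :
  (forall m u, m \in msupp p -> m u != 0%N -> f u = 'X_u) -> subst f p = p.
Proof.
move=> Hf; rewrite comp_mpolyEX [RHS]mpolyE; apply: eq_big_seq => m Hm.
congr (_ *: _); rewrite substXm mpolyXE_id; apply: eq_bigr => u _.
case: (eqVneq (m u) 0%N) => [->|H]; first by rewrite !expr0.
by rewrite (Hf m u Hm H).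
Qed.

Lemma subst_zero (f : 'I_6 -> R) p :
  (forall m, m \in msupp p -> exists u, m u != 0%N /\ f u = 0) -> subst f p = 0.
Proof.
move=> Hf; rewrite comp_mpolyEX big1_seq // => m /andP[_ Hm].
have [u [H1 H2]] := Hf m Hm.
by rewrite substXm (bigD1 u) //= H2 expr0n (negbTE H1) mul0r scaler0.
Qed.

Definition subf (s t : 'I_6) (r : K) (u : 'I_6) : R :=
  if u == s then r *: 'X_t else 'X_u.
Notation sub s t r := (subst (subf s t r)).
Definition lin (s t : 'I_6) (r : K) : R := 'X_s - r *: 'X_t.

Lemma sub_lin s t r : s != t -> sub s t r (lin s t r) = 0.
Proof.
move=> st; rewrite /lin rmorphB /= comp_mpolyZ !substX /subf eqxx.
by rewrite eq_sym (negbTE st) subrr.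
Qed.

Lemma sub_div s t r p : s != t -> exists q, p - sub s t r p = lin s t r * q.
Proof.
move=> st.
pose P (p : R) := exists q, p - sub s t r p = lin s t r * q.
have PD : forall p1 p2, P p1 -> P p2 -> P (p1 + p2).
  move=> p1 p2 [q1 h1] [q2 h2]; exists (q1 + q2).
  by rewrite rmorphD /= mulrDr -h1 -h2; ring.
have PM : forall p1 p2, P p1 -> P p2 -> P (p1 * p2).
  move=> p1 p2 [q1 h1] [q2 h2]; exists (p1 * q2 + q1 * sub s t r p2).
  rewrite rmorphM /=.
  have -> : p1 * p2 - sub s t r p1 * sub s t r p2 =
    p1 * (p2 - sub s t r p2) + (p1 - sub s t r p1) * sub s t r p2 by ring.
  rewrite h1 h2; ring.
have P1 : P 1 by exists 0; rewrite rmorph1 subrr mulr0.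
have PC : forall c, P c%:MP by move=> c; exists 0; rewrite comp_mpolyC subrr mulr0.
have PX : forall u, P 'X_u.
  move=> u; rewrite /P substX /subf; case: eqP => [->|_].
    by exists 1; rewrite mulr1.
  by exists 0; rewrite subrr mulr0.
suff : P p by [].
rewrite [p]mpolyE; apply: (big_ind P) => //; first by exists 0; rewrite rmorph0 subrr mulr0.
move=> m _; rewrite -mul_mpolyC; apply: (PM); first exact: PC.
have Pprod : forall (s0 : seq 'I_6) (F : 'I_6 -> R), (forall u, P (F u)) ->
    P (\prod_(u <- s0) F u).
  move=> s0 F HF; elim: s0 => [|u s0 IH]; first by rewrite big_nil.
  by rewrite big_cons; apply: (PM).
rewrite mpolyXE_id; apply: Pprod => u.
elim: (m u) => [|k IH]; first by rewrite expr0.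
by rewrite exprS; apply: (PM).
Qed.


Lemma lin_neq0 s t r : s != t -> lin s t r != 0.
Proof.
move=> st; apply/eqP => /(congr1 (mcoeff U_(s))).
have ts : (t == s) = false by rewrite eq_sym (negbTE st).
rewrite /lin mcoeffB mcoeffZ !mcoeffXU eqxx ts mulr0 subr0 mcoeff0.
by move/eqP; rewrite oner_eq0.
Qed.

Lemma sub_fix s t r p : (forall m, m \in msupp p -> m s = 0%N) -> sub s t r p = p.
Proof.
move=> H; apply: subst_fix => m u Hm Hu; rewrite /subf.
by case: eqP => // eus; move: Hu; rewrite eus H ?eqxx.
Qed.

Lemma div_step s t r (G F2 h q : R) : s != t -> sub s t r F2 = F2 -> F2 != 0 ->
  lin s t r * G * q = F2 * h ->
  (forall h1 q1, G * q1 = F2 * h1 -> exists h', h1 = G * h') ->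
  exists h', h = lin s t r * G * h'.
Proof.
move=> st fix2 nz2 E IH.
have : sub s t r (lin s t r * G * q) = sub s t r (F2 * h) by rewrite E.
rewrite !rmorphM /= sub_lin // fix2 !mul0r => /esym/eqP; rewrite mulf_eq0 (negbTE nz2) /=.
move=> /eqP sh0; have [q' Hq'] := sub_div r h st.
move: Hq'; rewrite sh0 subr0 => Eh.
move: E; rewrite Eh -!mulrA [F2 * _]mulrCA => /(mulfI (lin_neq0 r st)).
by move=> /IH [h' ->]; exists h'; rewrite mulrA.
Qed.

Definition xv (i : 'I_3) : R := 'X_(vidx i (o2 0)).
Definition yv (i : 'I_3) : R := 'X_(vidx i (o2 1)).
Definition BF (i : 'I_3) (a : nat) (p : {poly K}) : R :=
  \sum_(t < a.+1) p`_t *: (xv i ^+ t * yv i ^+ (a - t)).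

Lemma BF0 i p : BF i 0 p = (p`_0)%:MP.
Proof. by rewrite /BF big_ord1 /= !expr0 mulr1 -mul_mpolyC mulr1. Qed.

Lemma BFB i a p q : BF i a (p - q) = BF i a p - BF i a q.
Proof.
rewrite /BF -sumrB; apply: eq_bigr => t _; by rewrite coefB scalerBl.
Qed.

Lemma BFC i a c p : BF i a (c%:P * p) = c *: BF i a p.
Proof.
rewrite /BF scaler_sumr; apply: eq_bigr => t _; by rewrite coefCM scalerA.
Qed.

Lemma BFX i a p : BF i a.+1 ('X * p) = xv i * BF i a p.
Proof.
rewrite /BF big_ord_recl /= coefXM eqxx scale0r add0r mulr_sumr.
apply: eq_bigr => t _; rewrite coefXM /= /bump /= add1n subSS.
by rewrite -scalerAr mulrA exprS.
Qed.

Lemma BFY i a (p : {poly K}) : (size p <= a.+1)%N -> BF i a.+1 p = yv i * BF i a p.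
Proof.
move=> sp; rewrite /BF big_ord_recr /= (nth_default 0 sp) scale0r addr0 mulr_sumr.
apply: eq_bigr => t _; rewrite -scalerAr /= subSn ?exprS; last by rewrite -ltnS.
by congr (_ *: _); rewrite mulrCA.
Qed.

Lemma monoXY (m : 'X_{1..6}) s t : s != t ->
  (forall u, u != s -> u != t -> m u = 0%N) -> 'X_[m] = 'X_s ^+ m s * 'X_t ^+ m t :> R.
Proof.
move=> st H; rewrite mpolyXE_id (bigD1 s) //= (bigD1 t) /=; last by rewrite eq_sym.
rewrite big1 ?mulr1 ?mulrA // => u /andP[us ut]; by rewrite H // expr0.
Qed.

Lemma th_repr_var i a (F : R) m : trihomog_of (tscale a (evec i)) F -> m \in msupp F ->
  [/\ (m (vidx i (o2 0)) + m (vidx i (o2 1)))%N = a,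
      'X_[m] = xv i ^+ m (vidx i (o2 0)) * yv i ^+ m (vidx i (o2 1)) &
      forall i' j', i' != i -> m (vidx i' j') = 0%N].
Proof.
move=> H Hm; rewrite mcoeff_msupp in Hm.
have Ho : forall i' j', i' != i -> m (vidx i' j') = 0%N.
  move=> i' j' ne; apply: (th_zero_var j' H Hm).
  by rewrite comp3_tscale comp3_evec eq_sym (negbTE ne) muln0.
split => //.
- by rewrite -tdeg_comp (H m Hm) comp3_tscale comp3_evec eqxx muln1.
- apply: monoXY; first exact: vidx_neq01.
  move=> u h0 h1; have [i' [j' [ne ->]]] := dir_others h0 h1; exact: Ho.
Qed.

Definition BFpoly i a (F : R) : {poly K} :=
  \poly_(t < a.+1) (\sum_(m <- msupp F) F@_m * ((m (vidx i (o2 0)) == t)%:R)).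

Lemma BF_repr i a (F : R) : trihomog_of (tscale a (evec i)) F -> F = BF i a (BFpoly i a F).
Proof.
move=> H; rewrite {1}[F]mpolyE /BF /BFpoly.
under [RHS]eq_bigr => t _ do rewrite coef_poly ltn_ord scaler_suml.
rewrite exchange_big /=; apply: eq_big_seq => m Hm.
have [Ha EX _] := th_repr_var H Hm.
have lt : (m (vidx i (o2 0)) < a.+1)%N by rewrite ltnS -Ha leq_addr.
rewrite (bigD1 (Ordinal lt)) //= big1 => [|t tn].
  rewrite eqxx mulr1 addr0 EX -Ha addKn //.
rewrite (_ : (m (vidx i (o2 0)) == t) = false) ?mulr0 ?scale0r //.
apply/negbTE; apply: contra tn => /eqP e; apply/eqP/ord_inj => /=; by rewrite e.
Qed.

End Work.


Section Ideal.
Variable K : fieldType.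
Local Notation R := {mpoly K[6]}.

Definition inI (gs : seq R) (f : R) : Prop :=
  exists c : nat -> R, f = \sum_(l < size gs) c l * gs`_l.

Lemma idealE gs f : ideal_gen gs f <-> inI gs f.
Proof.
split => [[cs [sz ->]]|[c ->]]; first by exists (fun l => cs`_l).
exists (mkseq c (size gs)); split; first by rewrite size_mkseq.
by apply: eq_bigr => l _; rewrite nth_mkseq.
Qed.

Lemma inI0 gs : inI gs 0.
Proof. by exists (fun _ => 0); rewrite big1 // => l _; rewrite mul0r. Qed.

Lemma inID gs f g : inI gs f -> inI gs g -> inI gs (f + g).
Proof.
move=> [c ->] [d ->]; exists (fun l => c l + d l).
by rewrite -big_split; apply: eq_bigr => l _; rewrite mulrDl.
Qed.

Lemma inIM gs h f : inI gs f -> inI gs (h * f).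
Proof.
move=> [c ->]; exists (fun l => h * c l).
by rewrite mulr_sumr; apply: eq_bigr => l _; rewrite mulrA.
Qed.

Lemma inIN gs f : inI gs f -> inI gs (- f).
Proof. by move=> H; rewrite -mulN1r; apply: inIM. Qed.

Lemma inIgen gs l : (l < size gs)%N -> inI gs gs`_l.
Proof.
move=> lt; exists (fun k => (k == l)%:R).
rewrite (bigD1 (Ordinal lt)) //= eqxx mul1r big1 ?addr0 // => k kn.
rewrite (_ : (k == l :> nat) = false) ?mul0r //.
by apply/negbTE; apply: contra kn => /eqP e; apply/eqP/ord_inj.
Qed.

Lemma inIsum gs (I : Type) (r : seq I) (F : I -> R) :
  (forall x, inI gs (F x)) -> inI gs (\sum_(x <- r) F x).
Proof.
move=> H; elim: r => [|x r IH]; first by rewrite big_nil; apply: inI0.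
by rewrite big_cons; apply: inID.
Qed.

Lemma inI_sub gs gs' f : (forall l, (l < size gs)%N -> inI gs' gs`_l) ->
  inI gs f -> inI gs' f.
Proof.
move=> H [c ->]; apply: inIsum => l; apply: inIM; exact: H.
Qed.

Lemma inI_take k gs f : inI (take k gs) f -> inI gs f.
Proof.
apply: inI_sub => l; rewrite size_take => lt; rewrite nth_take; last first.
  by apply: (leq_trans lt); rewrite geq_minl.
apply: inIgen; apply: (leq_trans lt); exact: geq_minr.
Qed.

Lemma inI_take_le k k' gs f : (k <= k')%N -> inI (take k gs) f -> inI (take k' gs) f.
Proof.
move=> kk; apply: inI_sub => l; rewrite size_take => lt.
have lk : (l < k)%N by apply: (leq_trans lt); rewrite geq_minl.
have ls : (l < size gs)%N by apply: (leq_trans lt); rewrite geq_minr.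
rewrite nth_take //; have -> : gs`_l = (take k' gs)`_l by rewrite nth_take // (leq_trans lk).
by apply: inIgen; rewrite size_take leq_min (leq_trans lk kk) ls.
Qed.

Lemma inI2 (F G f : R) : ideal_gen [:: F; G] f <-> exists a b, f = a * F + b * G.
Proof.
rewrite idealE; split => [[c ->]|[a [b ->]]].
  by exists (c 0%N), (c 1%N); rewrite !big_ord_recl big_ord0 addr0.
by exists (fun l => if l == 0%N then a else b); rewrite !big_ord_recl big_ord0 addr0.
Qed.

Lemma inI1 (F f : R) : ideal_gen [:: F] f <-> exists a, f = a * F.
Proof.
rewrite idealE; split => [[c ->]|[a ->]].
  by exists (c 0%N); rewrite !big_ord_recl big_ord0 addr0.
by exists (fun _ => a); rewrite !big_ord_recl big_ord0 addr0.
Qed.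

Lemma inI0E (f : R) : ideal_gen [::] f <-> f = 0.
Proof.
rewrite idealE; split => [[c ->]|->]; first by rewrite big_ord0.
exact: inI0.
Qed.

End Ideal.


Section Psi.
Variable K : fieldType.
Local Notation R := {mpoly K[6]}.
Local Notation subst f := (comp_mpoly [tuple f u | u < 6]).
Local Notation sub s t r := (subst (subf s t r)).

Definition dirpair (i : 'I_3) (s t : 'I_6) :=
  (s = vidx i (o2 0) /\ t = vidx i (o2 1)) \/ (s = vidx i (o2 1) /\ t = vidx i (o2 0)).

Lemma dirpair_neq i s t : dirpair i s t -> s != t.
Proof. by case=> [[-> ->]|[-> ->]]; rewrite ?vidx_neq01 // eq_sym vidx_neq01. Qed.

Lemma dirpair_other i j s t s' t' : i != j -> dirpair i s t -> dirpair j s' t' ->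
  [/\ s' != s, t' != s, s != s' & t != s'].
Proof.
move=> ij h1 h2.
have H : forall u u', (exists a, u = vidx i a) -> (exists b, u' = vidx j b) -> u != u'.
  by move=> u u' [a ->] [b ->]; apply: vidx_neqi.
have es : exists a, s = vidx i a by case: h1 => [[-> _]|[-> _]]; eexists.
have et : exists a, t = vidx i a by case: h1 => [[_ ->]|[_ ->]]; eexists.
have es' : exists a, s' = vidx j a by case: h2 => [[-> _]|[-> _]]; eexists.
have et' : exists a, t' = vidx j a by case: h2 => [[_ ->]|[_ ->]]; eexists.
by split; [rewrite eq_sym; exact: H | rewrite eq_sym; exact: H | exact: H | exact: H].
Qed.

Lemma lf_repr i (H : R) : linear_form i H -> exists a b, H = a *: xv K i + b *: yv K i.
Proof.
move=> [nz H1].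
have H1' : trihomog_of (tscale 1 (evec i)) H.
  have -> : tscale 1 (evec i) = evec i.
    by apply: comp3_inj => i'; rewrite comp3_tscale mul1n.
  exact: H1.
rewrite (BF_repr H1') /BF !big_ord_recl big_ord0 /= addr0.
exists (BFpoly i 1 H)`_1, (BFpoly i 1 H)`_0.
by rewrite expr0 mul1r subn0 !expr1 /bump /= subnn expr0 mulr1 addrC.
Qed.

Lemma lf_repr2 i (H : R) s t : linear_form i H -> dirpair i s t ->
  exists a b, H = a *: 'X_s + b *: 'X_t.
Proof.
move=> /lf_repr [a [b ->]] [[-> ->]|[-> ->]]; first by exists a, b.
by exists b, a; rewrite addrC.
Qed.

Lemma X_neq0 (u : 'I_6) : 'X_u != 0 :> R.
Proof.
apply/eqP => /(congr1 (mcoeff U_(u))); rewrite mcoeffXU eqxx mcoeff0.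
by move/eqP; rewrite oner_eq0.
Qed.

Lemma lf_norm i (H : R) : linear_form i H ->
  exists s t r c, [/\ dirpair i s t, c != 0 & H = c *: lin s t r].
Proof.
move=> lH; have [a [b EH]] := lf_repr lH.
have [a0|anz] := eqVneq a 0.
  exists (vidx i (o2 1)), (vidx i (o2 0)), 0, b; split; first by right.
    by apply: contra lH.1 => /eqP b0; rewrite EH a0 b0 !scale0r addr0.
  by rewrite EH a0 scale0r add0r /lin scale0r subr0.
exists (vidx i (o2 0)), (vidx i (o2 1)), (- (b / a)), a; split; first by left.
  by [].
rewrite EH /lin scalerBr scalerA mulrN mulrCA mulfV // mulr1 scaleNr opprK.
by [].
Qed.

Lemma sub_X_other s t (r : K) u : u != s -> sub s t r 'X_u = 'X_u.
Proof. by move=> us; rewrite substX /subf (negbTE us). Qed.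

Lemma sub_X_self s t (r : K) : sub s t r 'X_s = r *: 'X_t.
Proof. by rewrite substX /subf eqxx. Qed.

Lemma sub_lin_other s t (r : K) s' t' (r' : K) : s' != s -> t' != s ->
  sub s t r (lin s' t' r') = lin s' t' r'.
Proof. by move=> h1 h2; rewrite /lin rmorphB /= comp_mpolyZ !sub_X_other. Qed.

Variables (i j : 'I_3) (sF tF sG tG : 'I_6) (rF rG : K).
Hypotheses (ij : i != j) (dF : dirpair i sF tF) (dG : dirpair j sG tG).

Definition psi (p : R) : R := sub sG tG rG (sub sF tF rF p).
Local Notation linF := (lin sF tF rF).
Local Notation linG := (lin sG tG rG).

Lemma psi_morphM p q : psi (p * q) = psi p * psi q.
Proof. by rewrite /psi !rmorphM. Qed.
Lemma psi_morphD p q : psi (p + q) = psi p + psi q.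
Proof. by rewrite /psi !rmorphD. Qed.
Lemma psi_morphB p q : psi (p - q) = psi p - psi q.
Proof. by rewrite /psi !rmorphB. Qed.
Lemma psi_morphZ c p : psi (c *: p) = c *: psi p.
Proof. by rewrite /psi !comp_mpolyZ. Qed.
Lemma psi1 : psi 1 = 1.
Proof. by rewrite /psi !rmorph1. Qed.
Lemma psi0 : psi 0 = 0.
Proof. by rewrite /psi !rmorph0. Qed.
Lemma psi_sum (I : Type) (r : seq I) (F : I -> R) :
  psi (\sum_(x <- r) F x) = \sum_(x <- r) psi (F x).
Proof. by rewrite /psi !subst_sum. Qed.

Let oth := dirpair_other ij dF dG.

Lemma psi_linF : psi linF = 0.
Proof. by rewrite /psi sub_lin ?(dirpair_neq dF) // rmorph0. Qed.

Lemma psi_linG : psi linG = 0.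
Proof.
have [h1 h2 _ _] := oth.
by rewrite /psi sub_lin_other // sub_lin // (dirpair_neq dG).
Qed.

Lemma psi_ker p : psi p = 0 -> exists a b, p = a * linF + b * linG.
Proof.
move=> H0.
have [q1 E1] := sub_div rF p (dirpair_neq dF).
have [q2 E2] := sub_div rG (sub sF tF rF p) (dirpair_neq dG).
move: E2; rewrite -/(psi p) H0 subr0 => E2.
exists q1, q2; rewrite (mulrC q1) (mulrC q2) -E2 -E1 .
by rewrite subrK.
Qed.

Lemma subF_linG : sub sF tF rF linG = linG.
Proof. by have [h1 h2 _ _] := oth; rewrite sub_lin_other. Qed.
Lemma subG_linF : sub sG tG rG linF = linF.
Proof. by have [_ _ h1 h2] := oth; rewrite sub_lin_other. Qed.

Lemma psi_sep x y : linF * x = linG * y -> psi x = 0 /\ psi y = 0.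
Proof.
move=> E; split.
  have : sub sG tG rG (linF * x) = sub sG tG rG (linG * y) by rewrite E.
  rewrite !rmorphM /= subG_linF sub_lin ?(dirpair_neq dG) // mul0r => /eqP.
  rewrite mulf_eq0 (negbTE (lin_neq0 rF (dirpair_neq dF))) /= => /eqP sx0.
  have [q Eq] := sub_div rG x (dirpair_neq dG).
  move: Eq; rewrite sx0 subr0 => ->.
  by rewrite psi_morphM psi_linG mul0r.
have : sub sF tF rF (linF * x) = sub sF tF rF (linG * y) by rewrite E.
rewrite !rmorphM /= subF_linG sub_lin ?(dirpair_neq dF) // mul0r => /esym/eqP.
rewrite mulf_eq0 (negbTE (lin_neq0 rG (dirpair_neq dG))) /= => /eqP sy0.
by rewrite /psi sy0 rmorph0.
Qed.

Lemma scaleX_eq0 (c : K) u : c *: 'X_u = 0 :> R -> c = 0.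
Proof. by move/eqP; rewrite mscalerI (negbTE (X_neq0 u)) orbF => /eqP. Qed.

Lemma psi_lf i' (H : R) : linear_form i' H -> psi H = 0 ->
  (i' = i /\ exists c, c != 0 /\ H = c *: linF) \/
  (i' = j /\ exists c, c != 0 /\ H = c *: linG).
Proof.
move=> lH H0; have [h1 h2 h3 h4] := oth.
have [ei|nei] := eqVneq i' i.
  left; split => //; move: lH H0; rewrite ei => lH.
  have [a [b EH]] := lf_repr2 lH dF.
  rewrite EH /psi rmorphD /= !comp_mpolyZ sub_X_self sub_X_other;
    last by rewrite eq_sym (dirpair_neq dF).
  rewrite scalerA -scalerDl comp_mpolyZ sub_X_other // => /scaleX_eq0 /eqP.
  rewrite addrC addr_eq0 => /eqP eb.
  have anz : a != 0.
    by apply: contra lH.1 => /eqP a0; rewrite EH eb a0 mul0r oppr0 !scale0r addr0.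
  exists a; split => //; by rewrite eb /lin scalerBr scalerA scaleNr.
have [ej|nej] := eqVneq i' j.
  right; split => //; move: lH H0; rewrite ej => lH.
  have [a [b EH]] := lf_repr2 lH dG.
  rewrite EH /psi rmorphD /= !comp_mpolyZ !sub_X_other // rmorphD /= !comp_mpolyZ.
  rewrite sub_X_self sub_X_other; last by rewrite eq_sym (dirpair_neq dG).
  rewrite scalerA -scalerDl => /scaleX_eq0 /eqP.
  rewrite addrC addr_eq0 => /eqP eb.
  have anz : a != 0.
    by apply: contra lH.1 => /eqP a0; rewrite EH eb a0 mul0r oppr0 !scale0r addr0.
  exists a; split => //; by rewrite eb /lin scalerBr scalerA scaleNr.
exfalso; have [a [b EH]] := lf_repr lH.
have hF : forall k, vidx i' k != sF.
  by move=> k; case: dF => [[-> _]|[-> _]]; apply: vidx_neqi.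
have hG : forall k, vidx i' k != sG.
  by move=> k; case: dG => [[-> _]|[-> _]]; apply: vidx_neqi.
move: H0; rewrite EH /psi /xv /yv rmorphD /= !comp_mpolyZ !sub_X_other //.
rewrite rmorphD /= !comp_mpolyZ !sub_X_other // -EH => /eqP.
by rewrite (negbTE lH.1).
Qed.

End Psi.


Section Gen.
Variable K : fieldType.
Local Notation R := {mpoly K[6]}.
Local Notation subst f := (comp_mpoly [tuple f u | u < 6]).

Lemma inIk (gs : seq R) k f : (k <= size gs)%N ->
  inI (take k gs) f <-> exists c : nat -> R, f = \sum_(0 <= l < k) c l * gs`_l.
Proof.
move=> ks; rewrite /inI size_takel //.
split => [[c ->]|[c ->]]; exists c; rewrite big_mkord; apply: eq_bigr => l _;
  by rewrite nth_take.
Qed.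


Lemma koszul (gs : seq R) : regular_seq gs -> forall k, (k <= size gs)%N ->
  forall w : nat -> R, \sum_(0 <= l < k) w l * gs`_l = 0 ->
  forall l, (l < k)%N -> inI (take k gs) (w l).
Proof.
move=> [_ reg]; elim=> [|k IH] ksz w Hw l lk //.
have ks : (k < size gs)%N by [].
move: Hw; rewrite big_nat_recr //= => Hw.
have Hk : inI (take k gs) (w k).
  apply/idealE; apply: (reg (Ordinal ks)) => /=; apply/idealE; apply/(inIk _ (ltnW ks)).
  exists (fun l0 => - w l0).
  under [RHS]eq_bigr => l0 _ do rewrite mulNr.
  rewrite sumrN mulrC; apply/eqP; by rewrite -addr_eq0 addrC Hw.
have [u Hu] := (inIk _ (ltnW ks)).1 Hk.
have IH' := IH (ltnW ksz) (fun l => w l + u l * gs`_k).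
have gk : inI (take k.+1 gs) gs`_k.
  have -> : gs`_k = (take k.+1 gs)`_k by rewrite nth_take.
  by apply: inIgen; rewrite size_take leq_min leqnn ks.
move: lk; rewrite ltnS leq_eqVlt => /orP[/eqP ->|lk].
  exact: (inI_take_le (leqnSn k) Hk).
have := IH' _ l lk.
  move=> H; have : inI (take k.+1 gs) (w l + u l * gs`_k).
    apply: (inI_take_le (leqnSn k)); apply: H.
    rewrite (eq_bigr (fun l' => w l' * gs`_l' + u l' * gs`_l' * gs`_k)); last first.
      by move=> l' _; ring.
    by rewrite big_split /= -mulr_suml -Hu.
  move=> H2; have := inID H2 (inIN (inIM (u l) gk)).
  by rewrite addrK.
Qed.

Definition killf (i : 'I_3) (u : 'I_6) : R :=
  if (u == vidx i (o2 0)) || (u == vidx i (o2 1)) then 0 else 'X_u.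

Lemma kill_pos d (g : R) i : trihomog_of d g -> (0 < comp3 d i)%N -> subst (killf i) g = 0.
Proof.
move=> H pos; apply: subst_zero => m; rewrite mcoeff_msupp => Hm.
move: pos; rewrite -(H m Hm) tdeg_comp.
case: (eqVneq (m (vidx i (o2 0))) 0%N) => [->|h0].
  rewrite add0n => h1; exists (vidx i (o2 1)); split; first by rewrite -lt0n.
  by rewrite /killf eqxx orbT.
move=> _; exists (vidx i (o2 0)); split => //; by rewrite /killf eqxx.
Qed.

Lemma kill_fix d (g : R) i : trihomog_of d g -> comp3 d i = 0%N -> subst (killf i) g = g.
Proof.
move=> H c0; apply: subst_fix => m u; rewrite mcoeff_msupp => Hm mu.
rewrite /killf; case: ifP => // /orP[] /eqP eu; move: mu; rewrite eu;
  by rewrite (th_zero_var _ H Hm c0).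
Qed.

Lemma const_of d (g : R) : trihomog_of d g -> (forall i, comp3 d i = 0%N) -> g = (g@_0)%:MP.
Proof.
move=> H c0; apply/mpolyP => m; rewrite mcoeffC.
case: (eqVneq m 0%MM) => [->|mn]; first by rewrite mulr1.
rewrite mulr0; apply/eqP; rewrite mcoeff_eq0.
apply: contra mn; rewrite mcoeff_msupp => Hm; apply/eqP/mnmP => u; rewrite mnm0E.
have [i [j ->]] := vidx_surj u; exact: th_zero_var H Hm (c0 i).
Qed.

Lemma ideal2_eval (F G f : R) v : ideal_gen [:: F; G] f -> F.@[v] = 0 -> G.@[v] = 0 ->
  f.@[v] = 0.
Proof.
by move=> /inI2 [a [b ->]] h1 h2; rewrite mevalD !mevalM h1 h2 !mulr0 addr0.
Qed.

End Gen.


Section Lines.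
Variable K : fieldType.
Local Notation R := {mpoly K[6]}.
Local Notation subst f := (comp_mpoly [tuple f u | u < 6]).

Lemma eval_scale0 (c : K) (p : R) v : c != 0 -> ((c *: p).@[v] = 0 <-> p.@[v] = 0).
Proof.
move=> cn; rewrite mevalZ; split => [/eqP|->]; last by rewrite mulr0.
by rewrite mulf_eq0 (negbTE cn) => /eqP.
Qed.

Lemma line_F (L : line K) : line_ideal L (l_F L).
Proof. by apply/inI2; exists 1, 0; rewrite mul1r mul0r addr0. Qed.
Lemma line_G (L : line K) : line_ideal L (l_G L).
Proof. by apply/inI2; exists 0, 1; rewrite mul1r mul0r add0r. Qed.
Lemma line_M (L : line K) h f : line_ideal L f -> line_ideal L (h * f).
Proof.
move=> /inI2 [a [b ->]]; apply/inI2; exists (h * a), (h * b).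
by rewrite mulrDr !mulrA.
Qed.
Lemma line_Mr (L : line K) h f : line_ideal L f -> line_ideal L (f * h).
Proof. by rewrite mulrC; apply: line_M. Qed.

Lemma loci_eq i j sF tF sG tG (rF rG : K) (ij : i != j)
  (dF : dirpair i sF tF) (dG : dirpair j sG tG) (L0 L : line K) cF cG :
  cF != 0 -> cG != 0 -> l_F L0 = cF *: lin sF tF rF -> l_G L0 = cG *: lin sG tG rG ->
  is_line L -> psi sF tF sG tG rF rG (l_F L) = 0 -> psi sF tF sG tG rF rG (l_G L) = 0 ->
  forall v, locus L v <-> locus L0 v.
Proof.
move=> cFn cGn EF EG [ijL [lFL lGL]] p1 p2 v.
rewrite /locus EF EG !eval_scale0 //.
have [[e1 [c1 [c1n E1]]]|[e1 [c1 [c1n E1]]]] := psi_lf ij dF dG lFL p1;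
have [[e2 [c2 [c2n E2]]]|[e2 [c2 [c2n E2]]]] := psi_lf ij dF dG lGL p2.
- by move: ijL; rewrite e1 e2 eqxx.
- by rewrite E1 E2 !eval_scale0.
- by rewrite E1 E2 !eval_scale0 //; split => [[? [? ?]]|[? [? ?]]].
- by move: ijL; rewrite e1 e2 eqxx.
Qed.

End Lines.


Section Main.
Variable K : fieldType.
Local Notation R := {mpoly K[6]}.
Local Notation subst f := (comp_mpoly [tuple f u | u < 6]).
Local Notation Ln X l := (nth (dline K) X l).

Definition kf (i : 'I_3) (L : line K) : R := if l_i L != i then l_F L else l_G L.

Lemma kf_prop i L : is_line L -> [/\ kf i L != 0, line_ideal L (kf i L) &
  exists d, trihomog_of d (kf i L) /\ comp3 d i = 0%N].
Proof.
move=> [ij [[nF hF] [nG hG]]]; rewrite /kf; case: ifP => [ni|/negbFE/eqP ei].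
  split => //; first exact: line_F.
  by exists (evec (l_i L)); split => //; rewrite comp3_evec (negbTE ni).
split => //; first exact: line_G.
exists (evec (l_j L)); split => //; rewrite comp3_evec -ei.
by rewrite eq_sym (negbTE ij).
Qed.

Lemma dir_exists (X : seq (line K)) (gs : seq R) : variety_of_lines X ->
  (forall f, ideal_X X f <-> ideal_gen gs f) ->
  forall i, exists l, (l < size gs)%N /\ subst (@killf K i) gs`_l != 0.
Proof.
move=> [_ [Hl _]] gen i.
case: (boolP [exists l : 'I_(size gs), subst (@killf K i) gs`_l != 0]).
  by move=> /existsP [l Hl']; exists l; split.
move=> /existsPn Hn; exfalso.
pose h := \prod_(l < size X) kf i (Ln X l).
have kh : subst (@killf K i) h = h.
  rewrite rmorph_prod; apply: eq_bigr => l _.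
  have [_ _ [d [Hd c0]]] := kf_prop i (Hl l); exact: kill_fix Hd c0.
have nh : h != 0.
  by apply/prodf_neq0 => l _; have [] := kf_prop i (Hl l).
have ih : ideal_X X h.
  move=> l; rewrite /h (bigD1 l) //=; apply: line_Mr.
  by have [] := kf_prop i (Hl l).
move: (gen h).1 => /(_ ih) /idealE [c Ec].
have : subst (@killf K i) h = 0.
  rewrite Ec subst_sum big1 // => l _; rewrite rmorphM /=.
  by move: (Hn l); rewrite negbK => /eqP ->; rewrite mulr0.
by rewrite kh; apply/eqP.
Qed.

Lemma gen_nonzero (gs : seq R) l : regular_seq gs -> (l < size gs)%N -> gs`_l != 0.
Proof.
move=> [n1 reg] ls; apply/eqP => g0; apply: n1.
have : ideal_gen (take l gs) 1.
  apply: (reg (Ordinal ls)) => /=; rewrite g0 mul0r; apply/idealE; exact: inI0.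
by move=> /idealE /inI_take /idealE.
Qed.

Lemma gen_nonconst (gs : seq R) l d : regular_seq gs -> (l < size gs)%N ->
  trihomog_of d gs`_l -> exists i, (0 < comp3 d i)%N.
Proof.
move=> rg ls Hd; have nz := gen_nonzero rg ls.
case: (boolP [exists i, 0 < comp3 d i]%N) => [/existsP [i Hi]|/existsPn Hn].
  by exists i.
exfalso; have Ec : gs`_l = (gs`_l@_0)%:MP.
  by apply: (const_of Hd) => i; move: (Hn i); rewrite lt0n negbK => /eqP.
have cn : gs`_l@_0 != 0 by apply: contra nz => /eqP c0; rewrite Ec c0.
apply: rg.1; apply/idealE.
have := inIM (((gs`_l@_0)^-1)%:MP) (inIgen ls).
by rewrite {2}Ec -mpolyCM mulVf.
Qed.

End Main.


Section C3.
Variable K : fieldType.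
Local Notation R := {mpoly K[6]}.
Local Notation Ln X l := (nth (dline K) X l).
Variables (X : seq (line K)) (gs : seq R) (i j : 'I_3) (sF tF sG tG : 'I_6)
  (rF rG cF cG : K) (o0 : 'I_(size X)).
Hypotheses (HX : variety_of_lines X) (rg : regular_seq gs)
  (gen : forall f, ideal_X X f <-> ideal_gen gs f)
  (ij : i != j) (dF : dirpair i sF tF) (dG : dirpair j sG tG)
  (cFn : cF != 0) (cGn : cG != 0)
  (EF : l_F (Ln X o0) = cF *: lin sF tF rF) (EG : l_G (Ln X o0) = cG *: lin sG tG rG)
  (n3 : (3 <= size gs)%N).
Local Notation ps := (psi sF tF sG tG rF rG).
Local Notation linF := (lin sF tF rF).
Local Notation linG := (lin sG tG rG).
Local Notation L0 := (Ln X o0).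

Lemma sum_delta n a (F : nat -> R) : (a < n)%N ->
  \sum_(0 <= l < n) (l == a)%:R * F l = F a.
Proof.
move=> al; rewrite big_mkord (bigD1 (Ordinal al)) //= eqxx mul1r big1 ?addr0 // => l ln.
rewrite (_ : (l == a :> nat) = false) ?mul0r //.
by apply/negbTE; apply: contra ln => /eqP e; apply/eqP/ord_inj.
Qed.

Lemma C3_false : False.
Proof.
have [Xne [Hl Hd]] := HX.
have psF : ps (l_F L0) = 0 by rewrite EF psi_morphZ (psi_linF _ _ _ _ dF) scaler0.
have psG : ps (l_G L0) = 0 by rewrite EG psi_morphZ (psi_linG _ _ ij dF dG) scaler0.
have inL0 : forall p, line_ideal L0 p -> ps p = 0.
  by move=> p /inI2 [a [b ->]]; rewrite psi_morphD !psi_morphM psF psG !mulr0 addr0.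
have inX : forall p, ideal_gen gs p -> ps p = 0.
  by move=> p /(gen p).2 /(_ o0); apply: inL0.
have gI : forall l, (l < size gs)%N -> ideal_gen gs gs`_l.
  by move=> l ls; apply/idealE; apply: inIgen.
have exAB : forall l, exists ab : R * R,
    (l < size gs)%N ==> (gs`_l == ab.1 * linF + ab.2 * linG).
  move=> l; case: (ltnP l (size gs)) => ls; last by exists (0,0).
  have [a [b E]] := psi_ker dF dG (inX _ (gI l ls)).
  by exists (a,b); rewrite /= E.
pose A l := (xchoose (exAB l)).1.
pose B l := (xchoose (exAB l)).2.
have HAB : forall l, (l < size gs)%N -> gs`_l = A l * linF + B l * linG.
  by move=> l ls; have := xchooseP (exAB l); move=> /implyP /(_ ls) /eqP.
pose D a b := A a * B b - A b * B a.
have HD : forall a b, (a < size gs)%N -> (b < size gs)%N -> ps (D a b) = 0.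
  move=> a b al bl; case: (eqVneq a b) => [->|ab].
    by rewrite /D subrr; apply: inX; apply/idealE; apply: inI0.
  have [c [cl ca cb]] : exists c, [/\ (c < size gs)%N, c != a & c != b].
    case: (boolP ((0 != a) && (0 != b))%N) => [/andP[h1 h2]|h].
      by exists 0%N; split => //; apply: leq_trans n3.
    case: (boolP ((1 != a) && (1 != b))%N) => [/andP[h1 h2]|h'].
      by exists 1%N; split => //; apply: leq_trans n3.
    have : (2 != a) && (2 != b) by move: h h' ab; clear; lia.
    by move=> /andP[h1 h2]; exists 2%N; split.
  pose w l := (l == a)%:R * D b c + (l == b)%:R * D c a + (l == c)%:R * D a b.
  have Hw : \sum_(0 <= l < size gs) w l * gs`_l = 0.
    rewrite (eq_bigr (fun l => (l == a)%:R * (D b c * gs`_l) + (l == b)%:R * (D c a * gs`_l)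
       + (l == c)%:R * (D a b * gs`_l))); last by move=> l _; rewrite /w; ring.
    rewrite !big_split /= !sum_delta // !HAB // /D; ring.
  have := koszul rg (leqnn _) Hw cl; rewrite take_size /w eqxx.
  rewrite (negbTE ca) (negbTE cb) !mul0r !add0r mul1r => H.
  by apply: inX; apply/idealE.
pose hsel (L : line K) := if ps (l_F L) != 0 then l_F L else l_G L.
have hne : forall l : 'I_(size X), l != o0 -> ps (hsel (Ln X l)) != 0.
  move=> l lo; rewrite /hsel; case: ifP => // /negbFE/eqP p1; apply/eqP => p2.
  have [v Hv] := Hd l o0 lo; apply: Hv.
  exact: (loci_eq ij dF dG cFn cGn EF EG (Hl l) p1 p2 v).
pose M := \prod_(l < size X | l != o0) hsel (Ln X l).
have psM : ps M != 0.
  rewrite /psi !rmorph_prod; apply/prodf_neq0 => l lo; exact: hne.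
have Min : forall l : 'I_(size X), l != o0 -> line_ideal (Ln X l) M.
  move=> l lo; rewrite /M (bigD1 l) //=; apply: line_Mr; rewrite /hsel.
  by case: ifP => _; [exact: line_F | exact: line_G].
have linF0 : line_ideal L0 linF.
  apply/inI2; exists (cF^-1)%:MP, 0.
  by rewrite EF mul_mpolyC scalerA mulVf // scale1r mul0r addr0.
have linG0 : line_ideal L0 linG.
  apply/inI2; exists 0, (cG^-1)%:MP.
  by rewrite mul0r add0r EG mul_mpolyC scalerA mulVf // scale1r.
have MF : ideal_gen gs (M * linF).
  apply/(gen _).1 => l; case: (eqVneq l o0) => [->|lo]; first exact: line_M.
  exact: line_Mr (Min l lo).
have MG : ideal_gen gs (M * linG).
  apply/(gen _).1 => l; case: (eqVneq l o0) => [->|lo]; first exact: line_M.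
  exact: line_Mr (Min l lo).
move: MF => /idealE [c Ec]; move: MG => /idealE [e Ee].
pose P := \sum_(a < size gs) c a * A a.
pose Q := \sum_(a < size gs) c a * B a.
pose P' := \sum_(b < size gs) e b * A b.
pose Q' := \sum_(b < size gs) e b * B b.
have E1 : M * linF = linF * P + linG * Q.
  rewrite Ec /P /Q !mulr_sumr -big_split; apply: eq_bigr => a _ /=; rewrite HAB; [ring | exact: ltn_ord].
have E2 : M * linG = linF * P' + linG * Q'.
  rewrite Ee /P' /Q' !mulr_sumr -big_split; apply: eq_bigr => a _ /=; rewrite HAB; [ring | exact: ltn_ord].
have [s1 s2] : ps (M - P) = 0 /\ ps Q = 0.
  apply: (psi_sep ij dF dG); rewrite mulrBr (mulrC linF M) E1; ring.
have [s3 s4] : ps P' = 0 /\ ps (M - Q') = 0.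
  apply: (psi_sep ij dF dG); rewrite mulrBr (mulrC linG M) E2; ring.
have e1 : ps M = ps P by move: s1; rewrite psi_morphB => /eqP; rewrite subr_eq0 => /eqP.
have e2 : ps M = ps Q' by move: s4; rewrite psi_morphB => /eqP; rewrite subr_eq0 => /eqP.
have key : P * Q' - P' * Q =
    \sum_(a < size gs) \sum_(b < size gs) c a * e b * D a b.
  rewrite /P /Q' /P' /Q !big_distrlr /= [X in _ - X]exchange_big /= -sumrB.
  apply: eq_bigr => a _; rewrite -sumrB; apply: eq_bigr => b _; rewrite /D; ring.
have : ps (P * Q' - P' * Q) = ps M * ps M.
  by rewrite psi_morphB !psi_morphM s3 mul0r subr0 -e1 -e2.
rewrite key psi_sum big1 => [|a _]; last first.
  rewrite psi_sum big1 // => b _; by rewrite !psi_morphM HD ?mulr0.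
by move/esym/eqP; rewrite mulf_eq0 orbb (negbTE psM).
Qed.

End C3.

Section Closed.
Variable K : closedFieldType.
Local Notation R := {mpoly K[6]}.
Local Notation subst f := (comp_mpoly [tuple f u | u < 6]).
Local Notation sub s t r := (subst (subf s t r)).

Lemma div_BF (i : 'I_3) a (p : {poly K}) (F2 : R) : p != 0 -> (size p <= a.+1)%N ->
  (forall m, m \in msupp F2 -> m (vidx i (o2 0)) = 0%N /\ m (vidx i (o2 1)) = 0%N) ->
  F2 != 0 -> forall h q, BF i a p * q = F2 * h -> exists h', h = BF i a p * h'.
Proof.
move=> + + HF2 nz2; elim: a p => [|a IH] p nzp sp.
  move=> h q _; rewrite BF0.
  have c0 : p`_0 != 0.
    by apply: contra nzp => /eqP c0; rewrite (size1_polyC sp) c0.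
  exists ((p`_0)^-1%:MP * h); by rewrite mulrA -mpolyCM mulfV // mul1r.
have fix0 : forall t r, sub (vidx i (o2 0)) t r F2 = F2.
  by move=> t r; apply: sub_fix => m /HF2 [].
have fix1 : forall t r, sub (vidx i (o2 1)) t r F2 = F2.
  by move=> t r; apply: sub_fix => m /HF2 [].
case: (leqP (size p) a.+1) => sp'.
  rewrite BFY // (_ : @yv K i = lin (vidx i (o2 1)) (vidx i (o2 0)) 0); last first.
    by rewrite /lin scale0r subr0.
  move=> h q E; apply: (div_step _ _ nz2 E); first by rewrite eq_sym vidx_neq01.
    exact: fix1.
  by move=> h1 q1; apply: IH.
have sp2 : size p = a.+2 by apply/eqP; rewrite eqn_leq sp sp'.
have [x rx] : exists x, root p x by apply/closed_rootP; rewrite sp2.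
have [q' Eq] := factor_theorem _ _ rx.
have nzq : q' != 0 by apply: contra nzp => /eqP q0; rewrite Eq q0 mul0r.
have sq : size q' = a.+1.
  move: sp2; rewrite Eq size_mul ?polyXsubC_eq0 // size_XsubC addn2 /=.
  by move=> [].
have -> : BF i a.+1 p = lin (vidx i (o2 0)) (vidx i (o2 1)) x * BF i a q'.
  rewrite Eq mulrC mulrBl BFB BFX BFC BFY ?sq // /lin mulrBl -scalerAl.
  by rewrite /xv /yv.
move=> h q E; apply: (div_step _ _ nz2 E); first exact: vidx_neq01.
  exact: fix0.
by move=> h1 q1; apply: IH; rewrite ?sq.
Qed.

End Closed.


Lemma line0_data (K : fieldType) (X : seq (line K)) : variety_of_lines X ->
  exists (o0 : 'I_(size X)) i j sF tF sG tG (rF rG cF cG : K),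
  [/\ i != j, dirpair i sF tF, dirpair j sG tG, cF != 0 & cG != 0] /\
      l_F (nth (dline K) X o0) = cF *: lin sF tF rF /\
      l_G (nth (dline K) X o0) = cG *: lin sG tG rG.
Proof.
move=> [Xne [Hl _]].
have X0 : (0 < size X)%N by move: Xne; case: (X).
have [ij [lF lG]] := Hl (Ordinal X0).
have [sF [tF [rF [cF [dF cFn EF]]]]] := lf_norm lF.
have [sG [tG [rG [cG [dG cGn EG]]]]] := lf_norm lG.
by exists (Ordinal X0), (l_i (nth (dline K) X (Ordinal X0))),
  (l_j (nth (dline K) X (Ordinal X0))), sF, tF, sG, tG, rF, rG, cF, cG.
Qed.

Lemma size_lt3 (K : fieldType) (X : seq (line K)) gs : variety_of_lines X ->
  regular_seq gs -> (forall f, ideal_X X f <-> ideal_gen gs f) -> (size gs < 3)%N.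
Proof.
move=> HX rg gen; rewrite ltnNge; apply/negP => n3.
have [o0 [i [j [sF [tF [sG [tG [rF [rG [cF [cG [[ij dF dG cFn cGn] [EF EG]]]]]]]]]]]]] :=
  line0_data HX.
exact: (C3_false HX rg gen ij dF dG cFn cGn EF EG n3).
Qed.

Lemma not_one (K : fieldType) (X : seq (line K)) : variety_of_lines X -> ~ ideal_X X 1.
Proof.
move=> HX H1.
have [o0 [i [j [sF [tF [sG [tG [rF [rG [cF [cG [[ij dF dG cFn cGn] [EF EG]]]]]]]]]]]]] :=
  line0_data HX.
have := H1 o0; move=> /inI2 [a [b E]].
have := congr1 (psi sF tF sG tG rF rG) E.
rewrite psi1 psi_morphD !psi_morphM EF EG !psi_morphZ (psi_linF _ _ _ _ dF).
rewrite (psi_linG _ _ ij dF dG) !scaler0 !mulr0 addr0 => /eqP.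
by rewrite oner_eq0.
Qed.

Lemma ord3_cover (i j k i' : 'I_3) : j != i -> k != i -> j != k ->
  i' = i \/ i' = j \/ i' = k.
Proof.
move=> ji ki jk.
have : ((i' : nat) = i \/ (i' : nat) = j \/ (i' : nat) = k).
  move: (ltn_ord i) (ltn_ord j) (ltn_ord k) (ltn_ord i') ji ki jk.
  rewrite -!val_eqE /=; lia.
by case=> [e|[e|e]]; [left|right;left|right;right]; apply: ord_inj.
Qed.

Definition oth1 (i : 'I_3) : 'I_3 := if (i : nat) == 0%N then o3 1 else o3 0.
Definition oth2 (i : 'I_3) : 'I_3 := if (i : nat) == 2%N then o3 1 else o3 2.

Lemma oth_prop (i : 'I_3) : [/\ oth1 i != i, oth2 i != i & oth1 i != oth2 i].
Proof.
case: i => [[|[|[|?]]] Hi] //; rewrite /oth1 /oth2 /=;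
  by split; apply/eqP => /(congr1 (@nat_of_ord 3)); rewrite /= ?o3E.
Qed.

Lemma form_of (d0 d1 : nat * nat * nat) (i j k : 'I_3) : j != i -> k != i -> j != k ->
  (forall i', i' != i -> comp3 d0 i' = 0%N) -> comp3 d1 i = 0%N ->
  d0 = tscale (comp3 d0 i) (evec i) /\
  d1 = tadd (tscale (comp3 d1 j) (evec j)) (tscale (comp3 d1 k) (evec k)).
Proof.
move=> ji ki jk H0 H1; split; apply: comp3_inj => i';
  rewrite ?comp3_tadd !comp3_tscale !comp3_evec.
  case: (eqVneq i i') => [->|ne]; first by rewrite muln1.
  by rewrite muln0 H0 // eq_sym.
have [->|[->|->]] := ord3_cover i' ji ki jk.
- by rewrite H1 (negbTE ji) (negbTE ki) !muln0.
- by rewrite eqxx eq_sym (negbTE jk) muln1 muln0 addn0.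
- by rewrite eqxx (negbTE jk) muln1 muln0.
Qed.

Lemma swap2 (K : fieldType) (F G f : {mpoly K[6]}) :
  ideal_gen [:: F; G] f <-> ideal_gen [:: G; F] f.
Proof.
by split => /inI2 [a [b ->]]; apply/inI2; exists b, a; rewrite addrC.
Qed.

Lemma third (a b : 'I_3) : a != b -> exists c, c != a /\ c != b.
Proof.
move=> ab; have [o1 o2 o12] := oth_prop a.
case: (eqVneq (oth1 a) b) => [e|ne].
  by exists (oth2 a); split => //; rewrite -e eq_sym.
by exists (oth1 a).
Qed.

Unset Implicit Arguments. Set Strict Implicit.

Theorem theorem5p10 (K : closedFieldType) (charK0 : [pchar K] =i pred0)
  (X : seq (line K)) (HX : variety_of_lines X) :
  complete_intersection (ideal_X X) <->
  exists (F1 F2 : {mpoly K[6]}) (i j k : 'I_3) (a b c : nat),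
    [/\ j != i, k != i, F1 != 0, F2 != 0 &
      [/\ trihomog_of (tscale a (evec i)) F1,
          trihomog_of (tadd (tscale b (evec j)) (tscale c (evec k))) F2 &
          forall f, ideal_X X f <-> ideal_gen [:: F1; F2] f]].
Proof.
split.
- move=> [gs [th [rg gen]]].
  have lt3 := size_lt3 HX rg gen.
  have de := dir_exists HX gen.
  have deg : forall l, (l < size gs)%N -> exists d, trihomog_of d gs`_l.
    by move=> l ls; apply: th; apply: mem_nth.
  have z : forall l d i, trihomog_of d gs`_l ->
      comp_mpoly [tuple @killf K i u | u < 6] gs`_l != 0 -> comp3 d i = 0%N.
    move=> l d i Hd Hk; apply/eqP; rewrite -leqn0 leqNgt; apply: contra Hk => pos.
    by apply/eqP; apply: kill_pos Hd pos.
  move: lt3 de deg z rg gen th; case: gs => [|g0 [|g1 [|g2 gs']]] //=.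
  + by move=> _ de; have [l [ ]] := de (o3 0).
  + move=> _ de deg z rg _ _.
    have [d0 H0] := deg 0%N isT.
    have [i pi] := gen_nonconst (l := 0%N) rg isT H0.
    have [[|l] [ls Hk]] := de i => //.
    by have := z 0%N d0 i H0 Hk; move=> e; rewrite e in pi.
  + move=> _ de deg z rg gen _.
    have [d0 H0] := deg 0%N isT.
    have [d1 H1] := deg 1%N isT.
    have Hz : forall i, comp3 d0 i = 0%N \/ comp3 d1 i = 0%N.
      move=> i; have [[|[|l]] [ls Hk]] := de i => //.
        by left; apply: z Hk.
      by right; apply: z Hk.
    have [i0 p0] := gen_nonconst (l := 0%N) rg isT H0.
    have [i1 p1] := gen_nonconst (l := 1%N) rg isT H1.
    have n0 : g0 != 0 := gen_nonzero (l := 0%N) rg isT.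
    have n1 : g1 != 0 := gen_nonzero (l := 1%N) rg isT.
    case: (boolP [exists i, [forall i', (i' != i) ==> (comp3 d0 i' == 0%N)]]).
      move=> /existsP [i /forallP Hc].
      have c0 : forall i', i' != i -> comp3 d0 i' = 0%N.
        by move=> i' ne; apply/eqP; apply: (implyP (Hc i')) ne.
      have pi : (0 < comp3 d0 i)%N.
        by case: (eqVneq i0 i) => [<-//|ne]; rewrite c0 in p0.
      have d1i : comp3 d1 i = 0%N by case: (Hz i) => // e; rewrite e in pi.
      have [o1 o2 o12] := oth_prop i.
      have [E0 E1] := form_of o1 o2 o12 c0 d1i.
      exists g0, g1, i, (oth1 i), (oth2 i), (comp3 d0 i), (comp3 d1 (oth1 i)),
        (comp3 d1 (oth2 i)).
      by split => //; split; [rewrite -E0 | rewrite -E1 | ].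
    move=> /existsPn Hn.
    have a1 : comp3 d0 i1 = 0%N by case: (Hz i1) => // e; rewrite e in p1.
    have c1 : forall i', i' != i1 -> comp3 d1 i' = 0%N.
      move=> i' ne; apply/eqP; rewrite -leqn0 leqNgt; apply/negP => pi'.
      have a2 : comp3 d0 i' = 0%N by case: (Hz i') => // e; rewrite e in pi'.
      have [i'' [h1 h2]] := third ne.
      move: (Hn i''); rewrite negb_forall => /existsP [i3]; rewrite negb_imply.
      move=> /andP [ne3 /eqP nz3]; apply: nz3.
      have j1 : i1 != i'' by rewrite eq_sym.
      have j2 : i' != i'' by rewrite eq_sym.
      have j3 : i1 != i' by rewrite eq_sym.
      have [e|[e|e]] := ord3_cover i3 j1 j2 j3.
      + by rewrite e eqxx in ne3.
      + by rewrite e.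
      + by rewrite e.
    have [o1 o2 o12] := oth_prop i1.
    have [E1 E0] := form_of o1 o2 o12 c1 a1.
    exists g1, g0, i1, (oth1 i1), (oth2 i1), (comp3 d1 i1), (comp3 d0 (oth1 i1)),
      (comp3 d0 (oth2 i1)).
    split => //; split; [by rewrite -E1 | by rewrite -E0 | ].
    by move=> f; rewrite gen swap2.
- move=> [F1 [F2 [i [j [k [a [b [c [ji ki n1 n2 [h1 h2 gen]]]]]]]]]].
  exists [:: F1; F2]; split; last split; last exact: gen.
  + move=> g; rewrite !inE => /orP [] /eqP ->; [by exists (tscale a (evec i)) |
      by exists (tadd (tscale b (evec j)) (tscale c (evec k)))].
  + split; first by move=> /(gen 1).2; apply: not_one.
    case=> [[|[|?]] Hl] //= h.
      move=> /inI0E /eqP; rewrite mulf_eq0 (negbTE n1) /= => /eqP ->.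
      by apply/inI0E.
    move=> /inI1 [q Eq]; apply/inI1.
    have EF := BF_repr h1.
    have pn : BFpoly i a F1 != 0.
      apply: contra n1 => /eqP p0; rewrite EF p0 /BF.
      by apply/eqP; apply: big1 => t _; rewrite coef0 scale0r.
    have sp : (size (BFpoly i a F1) <= a.+1)%N by apply: size_poly.
    have HF2 : forall m, m \in msupp F2 ->
        m (vidx i (o2 0)) = 0%N /\ m (vidx i (o2 1)) = 0%N.
      move=> m; rewrite mcoeff_msupp => Hm.
      have ci : comp3 (tadd (tscale b (evec j)) (tscale c (evec k))) i = 0%N.
        by rewrite comp3_tadd !comp3_tscale !comp3_evec (negbTE ji) (negbTE ki) !muln0.
      by split; apply: (th_zero_var _ h2 Hm ci).
    have E : BF i a (BFpoly i a F1) * q = F2 * h by rewrite -EF mulrC Eq.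
    have [h' Eh] := div_BF pn sp HF2 n2 E.
    by exists h'; rewrite Eh -EF mulrC.
Qed.
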